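(* Let $\mathbf P\in\mathbb{R}^{n\times n}$ be symmetric positive definite and $\mathbf c\in\mathbb{R}^n$, and let $\ell^*_{\mathbf c,\mathbf P}=\sup_{\beta\in\mathcal{I}_{\mathbf P}}\ell_{\mathbf c,\mathbf P}(\beta)$, with $\ell_{\mathbf c,\mathbf P}$ and $\mathcal{I}_{\mathbf P}$ as defined below. Then $$\mathcal{E}(\mathbf c,\mathbf P)\subseteq \operatorname{int}\mathcal{B}(\mathbf 0,1)\iff \ell^*_{\mathbf c,\mathbf P}>-1,$$ and $$\mathcal{E}(\mathbf c,\mathbf P)\Subset\mathcal{B}(\mathbf 0,1)\iff \ell^*_{\mathbf c,\mathbf P}=-1.$$
   Context: $\mathcal{E}(\mathbf c,\mathbf P)=\{\mathbf x\in\mathbb{R}^n:(\mathbf x-\mathbf c)^\top\mathbf P(\mathbf x-\mathbf c)\le 1\}$; $\mathcal{B}(\mathbf 0,1)=\{\mathbf x:\mathbf x^\top\mathbf x\le1\}$ and $\operatorname{int}\mathcal{B}(\mathbf 0,1)$ is the open unit ball. $\mathcal{E}\Subset\mathcal{E}_0$ means $\mathcal{E}\subseteq\mathcal{E}_0$ and $\partial\mathcal{E}\cap\partial\mathcal{E}_0\neq\emptyset$. Let $\mathbf P=\mathbf V\mathbf D\mathbf V^\top$ be a spectral decomposition with $\mathbf V$ orthogonal and $\mathbf D$ diagonal with entries $\lambda_i=D_{ii}$; let $\bar{\mathbf c}=\mathbf V^\top\mathbf c$, $S(\bar{\mathbf c})=\{i:\bar c_i\ne0\}$, and $\lambda_{\min}(\mathbf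 P)$ the smallest eigenvalue of $\mathbf P$. Set $\mathcal{I}_{\mathbf P}=(\lambda_{\min}(\mathbf P)^{-1},\infty)$ if some $i\in S(\bar{\mathbf c})$ has $\lambda_i=\lambda_{\min}(\mathbf P)$, and $\mathcal{I}_{\mathbf P}=[\lambda_{\min}(\mathbf P)^{-1},\infty)$ otherwise; and $\ell_{\mathbf c,\mathbf P}(\beta)=-\beta-\sum_{i\in S(\bar{\mathbf c})}\bar c_i^2\frac{\lambda_i\beta}{\lambda_i\beta-1}$ for $\beta\in\mathcal{I}_{\mathbf P}$. *)

(* Defs.v *)
From HB Require Import structures.
From mathcomp Require Import all_boot all_order all_algebra.
From mathcomp Require Import all_classical all_reals all_analysis.
Set Implicit Arguments. Unset Strict Implicit. Unset Printing Implicit Defensive.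
Import Order.TTheory GRing.Theory Num.Theory.
Import numFieldNormedType.Exports.
Local Open Scope classical_set_scope.
Local Open Scope ring_scope.

Section Defs.
Context {R : realType} {n : nat}.

Definition sym_posdef (P : 'M[R]_n) : Prop :=
  P^T = P /\ forall x : 'cV[R]_n, x != 0 -> 0 < (x^T *m P *m x) 0 0.

Definition ellipsoid (c : 'cV[R]_n) (P : 'M[R]_n) : set 'cV[R]_n :=
  [set x | ((x - c)^T *m P *m (x - c)) 0 0 <= 1].

Definition unit_ball : set 'cV[R]_n := [set x | (x^T *m x) 0 0 <= 1].
Definition open_unit_ball : set 'cV[R]_n := [set x | (x^T *m x) 0 0 < 1].

Definition bdry (A : set 'cV[R]_n) : set 'cV[R]_n := closure A `\` A°.

Definition touching_incl (E E0 : set 'cV[R]_n) : Prop :=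
  E `<=` E0 /\ bdry E `&` bdry E0 !=set0.

Definition lambda_min (P : 'M[R]_n) : R := inf [set a : R | eigenvalue P a].

Definition spectral_decomp (P V D : 'M[R]_n) : Prop :=
  V^T *m V = 1%:M /\ is_diag_mx D /\ P = V *m D *m V^T.

Definition I_P (c : 'cV[R]_n) (P V D : 'M[R]_n) : set R :=
  let cbar := V^T *m c in
  if `[< exists i : 'I_n, cbar i 0 != 0 /\ D i i = lambda_min P >]
  then `](lambda_min P)^-1, +oo[%classic
  else `[(lambda_min P)^-1, +oo[%classic.

Definition ell (c : 'cV[R]_n) (V D : 'M[R]_n) (beta : R) : R :=
  let cbar := V^T *m c in
  - beta - \sum_(i < n | cbar i 0 != 0)
             (cbar i 0) ^+ 2 * ((D i i * beta) / (D i i * beta - 1)).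

Definition ell_star (c : 'cV[R]_n) (P V D : 'M[R]_n) : R :=
  sup [set ell c V D b | b in I_P c P V D].

End Defs.

(* Main.v *)
Require Import Defs.
From HB Require Import structures.
From mathcomp Require Import all_boot all_order all_algebra.
From mathcomp Require Import all_classical all_reals all_analysis.
From mathcomp Require Import ring lra.
Import Order.TTheory GRing.Theory Num.Theory.
Import numFieldNormedType.Exports.
Local Open Scope classical_set_scope.
Local Open Scope ring_scope.


Lemma cont_sum_at {R : realType} (T : topologicalType) (I : Type) (r : seq I)
   (P : pred I) (F : I -> T -> R) (x : T) :
  (forall i, P i -> {for x, continuous (F i)}) ->
  {for x, continuous (fun z => \sum_(i <- r | P i) F i z)}.
Proof.
move=> h; elim: r => [|i r IH].
  rewrite (_ : (fun z => _) = fun=> 0); first exact: cvg_cst.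
  by apply/funext => z; rewrite big_nil.
rewrite (_ : (fun z => _) = fun z => if P i then F i z + \sum_(j <- r | P j) F j z
   else \sum_(j <- r | P j) F j z); last by apply/funext => z; rewrite big_cons.
case: (boolP (P i)) => Pi; last exact: IH.
exact: (continuousD (h i Pi) IH).
Qed.

Lemma cont_term {R : realType} (l k x : R) : l * x - 1 != 0 ->
  {for x, continuous (fun b : R => k / (l * b - 1) ^+ 2)}.
Proof.
move=> hx.
have c1 : {for x, continuous (fun b : R => l * b - 1)}.
  apply: continuousB; last exact: cvg_cst.
  apply: continuousM; first exact: cvg_cst.
  exact: cvg_id.
apply: continuousM; first exact: cvg_cst.
apply: continuousV; first by rewrite expf_neq0.
rewrite (_ : (fun b => _) = fun b => (l * b - 1) * (l * b - 1)).
  exact: continuousM.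
by apply/funext => b; rewrite expr2.
Qed.

Section Core.
Context {R : realType} {n : nat}.
Implicit Types (lam al y : 'I_n -> R).

Definition hsum lam al (beta : R) :=
  \sum_(i | al i != 0) lam i * al i ^+ 2 / (lam i * beta - 1) ^+ 2.
Definition dsum lam al (beta : R) :=
  \sum_(i | al i != 0) al i ^+ 2 * ((lam i * beta) / (lam i * beta - 1)).

Lemma term_weak (l a yi beta : R) :
  0 <= beta -> 1 <= l * beta -> (a != 0 -> 1 < l * beta) ->
  yi ^+ 2 <= beta * (l * (yi - a) ^+ 2) +
    (if a != 0 then a ^+ 2 * ((l * beta) / (l * beta - 1)) else 0).
Proof.
move=> b0 h1 h2; case: ifPn => [a0|].
  have t1 := h2 a0; set t := l * beta.
  have tn : t - 1 != 0 by rewrite subr_eq0 gt_eqF.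
  have e : beta * (l * (yi - a) ^+ 2) + a ^+ 2 * (t / (t - 1)) - yi ^+ 2
     = ((t - 1) * yi - t * a) ^+ 2 / (t - 1).
    rewrite /t; field; exact: tn.
  rewrite -subr_ge0 e divr_ge0 // ?sqr_ge0 // subr_ge0 ltW //.
rewrite negbK => /eqP ->; rewrite addr0 subr0 mulrA.
rewrite -{1}(mul1r (yi ^+ 2)) ler_wpM2r ?sqr_ge0 // mulrC //.
Qed.

Lemma sum_weak lam al y beta : 0 <= beta ->
  (forall i, 1 <= lam i * beta) -> (forall i, al i != 0 -> 1 < lam i * beta) ->
  \sum_i lam i * (y i - al i) ^+ 2 <= 1 ->
  \sum_i y i ^+ 2 <= beta + dsum lam al beta.
Proof.
move=> b0 h1 h2 hq.
apply: (le_trans (ler_sum _ (fun i _ => @term_weak (lam i) (al i) (y i) beta b0 (h1 i) (@h2 i)))).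
rewrite big_split /= -mulr_sumr /dsum [X in _ <= _ + X]big_mkcond /=.
by rewrite lerD2r -{2}(mulr1 beta) ler_wpM2l.
Qed.

Lemma term_eq (l a beta : R) : (a != 0 -> l * beta != 1) ->
  let yi := (l * beta * a) / (l * beta - 1) in
  beta * (l * (yi - a) ^+ 2) - yi ^+ 2 =
    - (if a != 0 then a ^+ 2 * ((l * beta) / (l * beta - 1)) else 0) /\
  l * (yi - a) ^+ 2 = (if a != 0 then l * a ^+ 2 / (l * beta - 1) ^+ 2 else 0).
Proof.
move=> h yi; rewrite /yi; case: ifPn => [a0|].
  have tn : l * beta - 1 != 0 by rewrite subr_eq0 h.
  by split; field.
by rewrite negbK => /eqP ->; rewrite !(mulr0, mul0r, subr0, expr0n) /= oppr0.
Qed.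

Lemma sum_eq lam al y beta :
  (forall i, beta * (lam i * (y i - al i) ^+ 2) - y i ^+ 2 =
    - (if al i != 0 then al i ^+ 2 * ((lam i * beta) / (lam i * beta - 1)) else 0)) ->
  \sum_i lam i * (y i - al i) ^+ 2 = 1 ->
  \sum_i y i ^+ 2 = beta + dsum lam al beta.
Proof.
move=> h hq.
have -> : \sum_i y i ^+ 2 = \sum_i (beta * (lam i * (y i - al i) ^+ 2) +
    (if al i != 0 then al i ^+ 2 * ((lam i * beta) / (lam i * beta - 1)) else 0)).
  apply: eq_bigr => i _; move: (h i); set u := (if _ then _ else _).
  move=> e; rewrite -[u]opprK -e; ring.
by rewrite big_split /= -mulr_sumr hq mulr1 /dsum [in RHS]big_mkcond.
Qed.


Lemma sq_pos (x : R) : x != 0 -> 0 < x ^+ 2.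
Proof. by move=> hx; rewrite lt_def sqr_ge0 sqrf_eq0 hx. Qed.

Lemma exists_opt lam al (lm : R) (I : set R) :
  0 < lm -> (forall i, lm <= lam i) -> (exists j, lam j = lm) ->
  (forall b, I b -> lm^-1 <= b) -> (forall b, lm^-1 < b -> I b) ->
  (~ (exists i, al i != 0 /\ lam i = lm) -> I lm^-1) ->
  (forall b, I b -> forall i, al i != 0 -> 1 < lam i * b) ->
  exists beta, I beta /\ exists y, \sum_i lam i * (y i - al i) ^+ 2 = 1 /\
    \sum_i y i ^+ 2 = beta + dsum lam al beta.
Proof.
move=> lm0 lmle [j hj] HI1 HI2 HI3 HI4.
have Iup : forall a b, I a -> a <= b -> I b.
  move=> a b Ia ab; case: (eqVneq a b) => [<-//|ne]; apply: HI2.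
  by apply: le_lt_trans (HI1 _ Ia) _; rewrite lt_neqAle ne ab.
have lpos : forall i, 0 < lam i by move=> i; exact: lt_le_trans (lmle i).
have Hyeq : forall b, I b ->
   let y := fun i => lam i * b * al i / (lam i * b - 1) in
   \sum_i lam i * (y i - al i) ^+ 2 = hsum lam al b /\
   forall i, b * (lam i * (y i - al i) ^+ 2) - y i ^+ 2 =
    - (if al i != 0 then al i ^+ 2 * ((lam i * b) / (lam i * b - 1)) else 0).
  move=> b Ib y.
  have te : forall i, _ := fun i => term_eq (lam i) (al i) b
     (fun a0 => (negbT (gt_eqF (HI4 b Ib i a0)))).
  split; last by move=> i; exact: (te i).1.
  rewrite /hsum [RHS]big_mkcond /=; apply: eq_bigr => i _; exact: (te i).2.
case: (pselect (exists a, I a /\ 1 <= hsum lam al a)) => [[a [Ia ha]] | nA].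
  have [K defK] : exists K, K = \sum_(i | al i != 0) lam i * al i ^+ 2 by eexists.
  have K0 : 0 <= K.
    by rewrite defK; apply: sumr_ge0 => i _; rewrite mulr_ge0 ?sqr_ge0 // ltW.
  pose b := (2 + 2 * K) / lm.
  have hb : forall be, b <= be -> hsum lam al be < 1.
    move=> be bbe.
    have lmb : lm * b = 2 + 2 * K by rewrite /b mulrC divfK // gt_eqF.
    have le1 : hsum lam al be <= K / (1 + 2 * K) ^+ 2.
      rewrite /hsum [X in X / _]defK mulr_suml; apply: ler_sum => i ai.
      apply: ler_wpM2l; first by rewrite mulr_ge0 ?sqr_ge0 // ltW.
      have h1 : 1 + 2 * K <= lam i * be - 1.
        have : lm * b <= lam i * be.
          apply: ler_pM; [exact: ltW| |exact: lmle|exact: bbe].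
          by rewrite /b divr_ge0 // ?ltW //; lra.
        lra.
      rewrite lef_pV2 ?posrE ?sq_pos //.
      - by nra.
      - by rewrite gt_eqF //; lra.
      - by rewrite gt_eqF //; lra.
    apply: le_lt_trans le1 _; rewrite ltr_pdivrMr ?mul1r; first nra.
    apply: sq_pos; rewrite gt_eqF //; lra.
  have ab : a <= b.
    by rewrite leNgt; apply/negP => ba; have := hb a (ltW ba); rewrite ltNge ha.
  have cont : {within `[a, b], continuous (hsum lam al)}.
    apply: continuous_in_subspaceT => x xab.
    have Ix : I x by apply: Iup Ia _; move: xab; rewrite in_setE /= in_itv /= => /andP [].  
    apply: cont_sum_at => i ai; apply: cont_term.
    by rewrite subr_eq0 gt_eqF // HI4.
  have mm : Num.min (hsum lam al a) (hsum lam al b) <= 1 <= Num.max (hsum lam al a) (hsum lam al b).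
    by rewrite ge_min le_max ha /= (ltW (hb b (lexx b))) orbT.
  have [be] := IVT ab cont mm.
  rewrite in_itv /= => /andP [abe _] hbe.
  have Ibe : I be by apply: Iup Ia abe.
  exists be; split => //.
  have [h1 h2] := Hyeq be Ibe.
  exists (fun i => lam i * be * al i / (lam i * be - 1)); split; first by rewrite h1 hbe.
  by apply: sum_eq h2 _; rewrite h1 hbe.
have nex : ~ exists i, al i != 0 /\ lam i = lm.
  move=> [i [ai li]].
  pose d := Num.min 1 (lm * al i ^+ 2).
  have d0 : 0 < d by rewrite lt_min ltr01 mulr_gt0 // sq_pos.
  have d1 : d <= 1 by rewrite ge_min lexx.
  have d2 : d <= lm * al i ^+ 2 by rewrite ge_min lexx orbT.
  pose a := (1 + d) / lm.
  have Ia : I a.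
    apply: HI2; rewrite /a ltr_pdivlMr // mulVf ?gt_eqF //; lra.
  apply: nA; exists a; split => //.
  rewrite /hsum (bigD1 i) //=.
  have lad : lam i * a - 1 = d by rewrite li /a mulrC divfK ?gt_eqF //; ring.
  rewrite -[leLHS]addr0; apply: lerD.
  + rewrite lad li ler_pdivlMr ?sq_pos ?gt_eqF // mul1r; nra.
  + apply: sumr_ge0 => k /andP [ak _].
    by rewrite divr_ge0 ?sqr_ge0 // mulr_ge0 ?sqr_ge0 // ltW.
have Ib0 := HI3 nex.
have hb0 : hsum lam al lm^-1 < 1.
  by rewrite ltNge; apply/negP => h; apply: nA; exists lm^-1.
have aj : al j = 0.
  by apply/eqP; apply/negPn/negP => aj; apply: nex; exists j.
pose t := Num.sqrt ((1 - hsum lam al lm^-1) / lm).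
pose y := fun i => if i == j then t
  else lam i * lm^-1 * al i / (lam i * lm^-1 - 1).
have [h1 h2] := Hyeq _ Ib0.
exists lm^-1; split => //; exists y.
have Q : \sum_i lam i * (y i - al i) ^+ 2 = 1.
  have -> : \sum_i lam i * (y i - al i) ^+ 2 =
     \sum_i ((if al i != 0 then lam i * al i ^+ 2 / (lam i * lm^-1 - 1) ^+ 2 else 0)
      + (if i == j then lm * t ^+ 2 else 0)).
    apply: eq_bigr => i _; rewrite /y; case: eqVneq => [->|ne].
      by rewrite aj eqxx /= add0r subr0 hj.
    rewrite addr0.
    exact: (term_eq (lam i) (al i) lm^-1
     (fun a0 => (negbT (gt_eqF (HI4 _ Ib0 i a0))))).2.
  rewrite big_split /= -big_mkcond -big_mkcond big_pred1_eq.
  rewrite sqr_sqrtr; last by rewrite divr_ge0 ?subr_ge0 ?ltW.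
  by rewrite mulrC divfK ?gt_eqF // /hsum; ring.
split => //; apply: sum_eq Q => i.
rewrite /y; case: eqVneq => [->|ne].
  by rewrite aj eqxx /= subr0 hj oppr0 mulrA mulVf ?gt_eqF // mul1r subrr.
exact: h2.
Qed.

End Core.


Section Eig.
Context {R : realType} {n : nat}.




Lemma quad_diag (D : 'M[R]_n) (w : 'cV[R]_n) : is_diag_mx D ->
  (w^T *m D *m w) 0 0 = \sum_i D i i * w i 0 ^+ 2.
Proof.
move=> /is_diag_mxP dD; rewrite mxE; apply: eq_bigr => i _.
rewrite mxE (bigD1 i) //= big1 ?addr0.
  by rewrite !mxE expr2; ring.
by move=> k ki; rewrite dD ?mulr0 //.
Qed.

Lemma quad_id (w : 'cV[R]_n) : (w^T *m w) 0 0 = \sum_i w i 0 ^+ 2.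
Proof. by rewrite mxE; apply: eq_bigr => i _; rewrite mxE expr2. Qed.

Lemma qform (P V D : 'M[R]_n) (x c : 'cV[R]_n) :
  V^T *m V = 1%:M -> is_diag_mx D -> P = V *m D *m V^T ->
  ((x - c)^T *m P *m (x - c)) 0 0 =
    \sum_i D i i * ((V^T *m x) i 0 - (V^T *m c) i 0) ^+ 2.
Proof.
move=> VV dD ->.
have -> : (x - c)^T *m (V *m D *m V^T) *m (x - c) =
   (V^T *m (x - c))^T *m D *m (V^T *m (x - c)).
  by rewrite trmx_mul trmxK !mulmxA.
rewrite quad_diag //; apply: eq_bigr => i _.
by rewrite mulmxBr; congr (_ * (_ ^+ 2)); rewrite !mxE.
Qed.

Lemma nform (V : 'M[R]_n) (x : 'cV[R]_n) : V^T *m V = 1%:M ->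
  (x^T *m x) 0 0 = \sum_i (V^T *m x) i 0 ^+ 2.
Proof.
move=> VV; have VV' : V *m V^T = 1%:M by apply: mulmx1C.
rewrite -quad_id trmx_mul trmxK.
by rewrite mulmxA -(mulmxA x^T) VV' mulmx1.
Qed.

Lemma VtVy (V : 'M[R]_n) (y : 'I_n -> R) : V^T *m V = 1%:M ->
  forall i, (V^T *m (V *m \col_k y k)) i 0 = y i.
Proof. by move=> VV i; rewrite mulmxA VV mul1mx mxE. Qed.



Lemma row_diag (D : 'M[R]_n) i : is_diag_mx D ->
  (delta_mx 0 i : 'rV_n) *m D = D i i *: delta_mx 0 i.
Proof.
move=> /is_diag_mxP dD; rewrite -rowE; apply/rowP => k; rewrite !mxE /=.
case: eqVneq => [->|ki]; first by rewrite mulr1.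
by rewrite mulr0 dD // eq_sym.
Qed.

Lemma eig_iff (P V D : 'M[R]_n) a : spectral_decomp P V D ->
  eigenvalue P a <-> exists i, D i i = a.
Proof.
move=> [VV [dD ->]]; have VV' : V *m V^T = 1%:M by apply: mulmx1C.
split.
  move=> /eigenvalueP [v hv vn0].
  pose w := v *m V.
  have wD : w *m D = a *: w.
    have : v *m (V *m D *m V^T) *m V = a *: v *m V by rewrite hv.
    by rewrite -!mulmxA VV mulmx1 -scalemxAl !mulmxA.
  have wn0 : w != 0.
    apply: contraNneq vn0 => w0.
    by rewrite -[v]mulmx1 -VV' mulmxA -/w w0 mul0mx.
  have : [exists k, w 0 k != 0].
    apply: contraT; rewrite negb_exists => /forallP h.
    have w0 : w = 0.
      by apply/rowP => k; move: (h k); rewrite negbK => /eqP ->; rewrite mxE.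
    by rewrite w0 eqxx in wn0.
  move=> /existsP [k wk]; exists k.
  have : (w *m D) 0 k = (a *: w) 0 k by rewrite wD.
  rewrite [RHS]mxE mxE (bigD1 k) //= big1 ?addr0; last first.
    by move=> l lk; move/is_diag_mxP: dD => dD; rewrite dD ?mulr0 //.
  by rewrite mulrC => /mulIf; apply.
move=> [i <-]; apply/eigenvalueP.
exists ((delta_mx 0 i : 'rV_n) *m V^T).
  by rewrite !mulmxA -(mulmxA (delta_mx 0 i : 'rV_n) V^T V) VV mulmx1 (row_diag D i dD) -scalemxAl.
apply: contra_neq (oner_neq0 R) => h.
have : (delta_mx 0 i : 'rV_n) *m V^T *m V = 0 by rewrite h mul0mx.
rewrite -mulmxA VV mulmx1 => /matrixP /(_ 0 i); rewrite !mxE !eqxx /=.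
by [].
Qed.


Lemma diag_pos (P V D : 'M[R]_n) : sym_posdef P -> spectral_decomp P V D ->
  forall i, 0 < D i i.
Proof.
move=> [_ pd] [VV [dD eP]] i.
pose e := V *m (delta_mx i 0 : 'cV_n).
have Ve : V^T *m e = delta_mx i 0 by rewrite /e mulmxA VV mul1mx.
have en0 : e != 0.
  apply: contra_neq (oner_neq0 R) => h.
  by move: Ve; rewrite h mulmx0 => /matrixP /(_ i 0); rewrite !mxE !eqxx.
have := pd e en0.
rewrite -[e]subr0 (qform _ _ _ _ _ VV dD eP) Ve mulmx0.
rewrite (bigD1 i) //= big1 ?addr0.
  by rewrite !mxE !eqxx subr0 expr1n mulr1.
by move=> k ki; rewrite !mxE (negbTE ki) /= subr0 expr0n /= mulr0.
Qed.

Lemma lm_facts (P V D : 'M[R]_n) : spectral_decomp P V D -> (0 < n)%N ->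
  (forall i, lambda_min P <= D i i) /\ exists j, D j j = lambda_min P.
Proof.
move=> sd n0.
pose k0 : 'I_n := Ordinal n0.
have [j _ hj] := @arg_minP _ _ 'I_n k0 xpredT (fun i => D i i) isT.
have Sj : [set a : R | eigenvalue P a] (D j j) by apply/(eig_iff _ _ _ _ sd); exists j.
have lbS : lbound [set a : R | eigenvalue P a] (D j j).
  by move=> a /= /(eig_iff _ _ _ _ sd) [i <-]; exact: hj.
have e : lambda_min P = D j j.
  apply/le_anti/andP; split.
    by apply: ge_inf => //; exists (D j j).
  by apply: lb_le_inf => //; exists (D j j).
by split; [move=> i; rewrite e; exact: hj | exists j; rewrite e].
Qed.

Lemma lm_zero (P : 'M[R]_n) : n = 0%N -> lambda_min P = 0.
Proof.
move=> n0; rewrite /lambda_min (_ : [set a : R | eigenvalue P a] = set0) ?inf0 //.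
apply/seteqP; split => // a /= /eigenvalueP [v _ vn0].
move/negP: vn0; apply; apply/eqP/rowP => k.
by case: k => k hk; exfalso; move: hk; rewrite n0.
Qed.

End Eig.


Section Key.
Context {R : realType} {n : nat}.

Lemma inv_le1 (l b : R) : 0 < l -> l^-1 <= b -> 1 <= l * b.
Proof.
move=> l0 h; rewrite -(mulfV (negbT (gt_eqF l0))); by rewrite ler_pM2l.
Qed.

Lemma inv_lt1 (l b : R) : 0 < l -> l^-1 < b -> 1 < l * b.
Proof.
move=> l0 h; rewrite -(mulfV (negbT (gt_eqF l0))); by rewrite ltr_pM2l.
Qed.

Lemma key (P V D : 'M[R]_n) (c : 'cV[R]_n) : sym_posdef P -> spectral_decomp P V D ->
  exists M, ell_star c P V D = - M /\
   (exists x, ellipsoid c P x /\ (x^T *m x) 0 0 = M) /\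
   (forall x, ellipsoid c P x -> (x^T *m x) 0 0 <= M).
Proof.
move=> spd sd; have [VV [dD eP]] := sd.
pose lam := fun i => D i i.
pose al := fun i => (V^T *m c) i 0.
pose lm := lambda_min P.
pose I := I_P c P V D.
have ellE : forall b, ell c V D b = - b - dsum lam al b by [].
have HI : forall b, I b <->
   (if `[< exists i, al i != 0 /\ lam i = lm >] then lm^-1 < b else lm^-1 <= b).
  by move=> b; rewrite /I /I_P; case: ifP => _; rewrite /= in_itv /= andbT.
have lmpos : (0 < n)%N -> 0 < lm /\ (forall i, lm <= lam i) /\ exists j, lam j = lm.
  move=> npos; have [h1 [j hj]] := lm_facts _ _ _ sd npos.
  split; last by split; [exact: h1| exists j].
  by rewrite /lm -hj; exact: diag_pos _ _ _ spd sd j.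
have lm0 : 0 <= lm.
  case: (posnP n) => [n0|npos]; first by rewrite /lm lm_zero.
  by have [] := lmpos npos => /ltW.
have Ilb : forall b, I b -> lm^-1 <= b.
  move=> b /HI; case: ifP => _ //; exact: ltW.
have HW : forall b, I b -> [/\ 0 <= b, forall i, 1 <= lam i * b &
     forall i, al i != 0 -> 1 < lam i * b].
  move=> b Ib; split.
  - by apply: le_trans (Ilb b Ib); rewrite invr_ge0.
  - move=> i; have [l0 [lle _]] := lmpos (leq_ltn_trans (leq0n i) (ltn_ord i)).
    apply: inv_le1; first exact: lt_le_trans (lle i).
    apply: le_trans (Ilb b Ib); rewrite lef_pV2 ?posrE //; exact: lt_le_trans (lle i).
  - move=> i ai; have [l0 [lle _]] := lmpos (leq_ltn_trans (leq0n i) (ltn_ord i)).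
    have li0 : 0 < lam i by exact: lt_le_trans (lle i).
    apply: inv_lt1 => //.
    move/HI: Ib; case: asboolP => [_ h|nex h].
      by apply: le_lt_trans h; rewrite lef_pV2 ?posrE.
    apply: lt_le_trans h; rewrite ltf_pV2 ?posrE // lt_neqAle lle andbT.
    by apply/eqP => e; apply: nex; exists i; split.
have HS : exists b, I b /\ exists y : 'I_n -> R,
    \sum_i lam i * (y i - al i) ^+ 2 <= 1 /\ \sum_i y i ^+ 2 = b + dsum lam al b.
  case: (posnP n) => [n0|npos].
    have e0 : forall F : 'I_n -> R, \sum_(i | true) F i = 0.
      by move=> F; apply: big1 => -[k hk]; exfalso; move: hk; rewrite n0.
    exists 0; split.
      apply/HI; rewrite /lm lm_zero // invr0.
      by case: asboolP => [[[k hk]]|]; [exfalso; move: hk; rewrite n0|].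
    exists (fun=> 0); rewrite !e0 ler01; split => //.
    rewrite /dsum big_mkcond /= e0; ring.
  have [l0 [lle [j hj]]] := lmpos npos.
  have := @exists_opt R n lam al lm I l0 lle (ex_intro _ j hj) Ilb.
  case => //.
  - by move=> b hb; apply/HI; case: ifP => // _; exact: ltW.
  - by move=> nex; apply/HI; case: asboolP.
  - by move=> b Ib; have [] := HW b Ib.
  move=> b [Ib [y [Qy Ny]]]; exists b; split => //; exists y; rewrite Qy; split => //.
have [b [Ib [y [Qy Ny]]]] := HS.
pose xs := V *m \col_k y k.
pose M := \sum_i y i ^+ 2.
have Ex : forall x : 'cV[R]_n, ellipsoid c P x <-> \sum_i lam i * ((V^T *m x) i 0 - al i) ^+ 2 <= 1.
  by move=> x; rewrite /ellipsoid /= (qform _ _ _ _ _ VV dD eP).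
have Nx : forall x : 'cV[R]_n, (x^T *m x) 0 0 = \sum_i (V^T *m x) i 0 ^+ 2.
  by move=> x; rewrite (nform _ _ VV).
have weak : forall b', I b' -> forall x : 'cV[R]_n, ellipsoid c P x ->
    (x^T *m x) 0 0 <= b' + dsum lam al b'.
  move=> b' Ib' x /Ex Qx; rewrite Nx; have [h1 h2 h3] := HW b' Ib'.
  exact: sum_weak h1 h2 h3 Qx.
have xsE : ellipsoid c P xs.
  by apply/Ex; under eq_bigr do rewrite VtVy //.
have xsN : (xs^T *m xs) 0 0 = M.
  by rewrite Nx; apply: eq_bigr => i _; rewrite VtVy.
exists M; split; last first.
  split; first by exists xs.
  by move=> x hx; rewrite /M Ny; exact: weak.
have ub : ubound [set ell c V D b | b in I] (- M).
  move=> e [b' Ib' <-]; rewrite ellE; have := weak b' Ib' xs xsE; rewrite xsN => h.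
  lra.
apply/le_anti/andP; split.
  by apply: ge_sup => //; exists (ell c V D b), b.
have -> : - M = ell c V D b by rewrite ellE /M Ny; ring.
by apply: ub_le_sup; [exists (- M) | exists b].
Qed.

End Key.


Section Topo.
Context {R : realType} {n : nat}.

Lemma cont_q (A : 'M[R]_n) (c : 'cV[R]_n) :
  continuous (fun x : 'cV[R]_n => ((x - c)^T *m A *m (x - c)) 0 0).
Proof.
have -> : (fun x : 'cV[R]_n => ((x - c)^T *m A *m (x - c)) 0 0) =
  (fun x => \sum_j (\sum_k (x k 0 - c k 0) * A k j) * (x j 0 - c j 0)).
  apply/funext => x; rewrite mxE; apply: eq_bigr => j _; rewrite mxE.
  congr (_ * _); last by rewrite !mxE.
  by apply: eq_bigr => k _; rewrite !mxE.
move=> x; apply: cont_sum_at => j _; apply: continuousM.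
  apply: cont_sum_at => k _; apply: continuousM; try exact: cvg_cst.
  apply: continuousB; first exact: (@coord_continuous R n 1 k 0 x).
  - exact: cst_continuous.
  - exact: cst_continuous.
apply: continuousB; first exact: (@coord_continuous R n 1 j 0 x).
exact: cst_continuous.
Qed.

Lemma cont_n : continuous (fun x : 'cV[R]_n => (x^T *m x) 0 0).
Proof.
have -> : (fun x : 'cV[R]_n => (x^T *m x) 0 0) =
   (fun x => ((x - 0)^T *m 1%:M *m (x - 0)) 0 0).
  by apply/funext => x; rewrite subr0 mulmx1.
exact: cont_q.
Qed.

Lemma closure_ell (c : 'cV[R]_n) (P : 'M[R]_n) :
  closure (ellipsoid c P) `<=` ellipsoid c P.
Proof.
move=> z zc; rewrite /ellipsoid /= leNgt; apply/negP => z1.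
pose U := (fun x : 'cV[R]_n => ((x - c)^T *m P *m (x - c)) 0 0) @^-1` [set r : R | 1 < r].
have oU : open U by apply: open_comp; [move=> x _; exact: cont_q | exact: open_gt].
have nU : nbhs z U by rewrite nbhsE; exists U => //; split.
have [x [Ex Ux]] := zc U nU.
by move: Ex; rewrite /ellipsoid /= leNgt Ux.
Qed.

Lemma ball_int (z : 'cV[R]_n) : (z^T *m z) 0 0 < 1 -> (@unit_ball R n)° z.
Proof.
move=> z1.
pose U := (fun x : 'cV[R]_n => (x^T *m x) 0 0) @^-1` [set r : R | r < 1].
have oU : open U by apply: open_comp; [move=> x _; exact: cont_n | exact: open_lt].
have nU : nbhs z U by rewrite nbhsE; exists U => //; split.
apply: filterS nU => x; rewrite /U /unit_ball /=; exact: ltW.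
Qed.

Lemma normsq_scale (t : R) (z : 'cV[R]_n) :
  ((t *: z)^T *m (t *: z)) 0 0 = t ^+ 2 * (z^T *m z) 0 0.
Proof.
rewrite !quad_id mulr_sumr; apply: eq_bigr => i _; rewrite mxE exprMn //.
Qed.

Lemma not_int (z : 'cV[R]_n) : (z^T *m z) 0 0 = 1 -> ~ (@unit_ball R n)° z.
Proof.
move=> z1 zi.
have cg : {for 1, continuous (fun t : R => t *: z)}.
  exact: continuousZr_tmp cvg_id.
have : nbhs (1 : R) ((fun t => t *: z) @^-1` unit_ball).
  by apply: cg; rewrite /= scale1r; exact: zi.
move/nbhs_ballP => [e e0 be].
have : unit_ball ((1 + e / 2) *: z).
  apply: be; rewrite -ball_normE /ball_ /= opprD addrA subrr add0r normrN.
  rewrite ger0_norm ?divr_ge0 ?ler0n ?(ltW e0) // ltr_pdivrMr // ltr_pMr // ltr1n.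
  done.
rewrite /unit_ball /= => h.
have h3 : (((1 + e / 2) *: z)^T *m ((1 + e / 2) *: z)) 0 0 <= 1 := h.
move: h3; rewrite normsq_scale z1 mulr1 => h3.
have e0' : 0 < e := e0.
nra.
Qed.

End Topo.


Theorem theorem1 (R : realType) (n : nat) (P : 'M[R]_n) (c : 'cV[R]_n)
    (V D : 'M[R]_n) :
  sym_posdef P -> spectral_decomp P V D ->
  (ellipsoid c P `<=` open_unit_ball <-> ell_star c P V D > -1) /\
  (touching_incl (ellipsoid c P) unit_ball <-> ell_star c P V D = -1).
Proof.
move=> spd sd.
have [M [eM [[xs [xsE xsN]] hM]]] := key _ _ _ c spd sd.
rewrite eM; split.
  split.
    by move=> sub; have := sub xs xsE; rewrite /open_unit_ball /= xsN => h; lra.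
  by move=> h x xE; rewrite /open_unit_ball /=; have := hM x xE; lra.
split.
  move=> [sub [z [[zcE zniE] [zcB zniB]]]].
  have zE := closure_ell _ _ _ zcE.
  have z1 : 1 <= (z^T *m z) 0 0.
    by rewrite leNgt; apply/negP => h; apply: zniB; exact: ball_int.
  have h2 := hM z zE; have := sub xs xsE; rewrite /unit_ball /= xsN => h1.
  have -> : M = 1 by lra.
  by [].
move=> e; have M1 : M = 1 by lra.
have sub : ellipsoid c P `<=` unit_ball.
  by move=> x xE; rewrite /unit_ball /= -M1; exact: hM.
split => //.
exists xs; split; split.
- exact: subset_closure.
- move=> h; have : (xs^T *m xs) 0 0 = 1 by rewrite xsN M1.
  by move/not_int; apply; exact: (interiorS sub h).
- by apply: subset_closure; rewrite /unit_ball /= xsN M1.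
- by apply: not_int; rewrite xsN.
Qed.
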